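(* Let $\mathcal X,\mathcal Y$ be Polish spaces, $c:\mathcal X\times\mathcal Y\to\mathbb R$ a measurable cost function bounded from below, $\varepsilon>0$, and $\tilde\mu\in\mathcal P(\mathcal X)$. Let $\mathcal F\subseteq L^{\exp}_\varepsilon(\tilde\mu)$ be a class of functions on $\mathcal X$, and let $\mathcal F^{(c,\varepsilon)}_{\tilde\mu}=\{\phi^{(c,\varepsilon)}_{\tilde\mu}\mid\phi\in\mathcal F\}$. Then for every $\delta>0$, \[ N(\delta,\mathcal F^{(c,\varepsilon)}_{\tilde\mu},\|\cdot\|_\infty)\le N(\delta/2,\mathcal F,\|\cdot\|_\infty). \]
   Context: $\exp_\varepsilon(t)=\exp(t/\varepsilon)$. $L^{\exp}_\varepsilon(\tilde\mu)$ is the set of measurable $\phi:\mathcal X\to[-\infty,\infty)$ with $0<\int\exp_\varepsilon(\phi)\,d\tilde\mu<\infty$. For such $\phi$, $\phi^{(c,\varepsilon)}_{\tilde\mu}(y)=-\varepsilon\log\int_{\mathcal X}\exp_\varepsilon(\phi(x)-c(x,y))\,d\tilde\mu(x)$, $y\in\mathcal Y$. For a class $\mathcal G$ of real-valued functions on a set $S$ and $\delta>0$, the uniform covering number $N(\delta,\mathcal G,\|\cdot\|_\infty)$ is the smallest $n\in\mathbb N$ such that there exist $f_1,\dots,f_n:S\to\mathbb R$ with $\sup_{f\in\mathcal G}\min_i\|f-f_i\|_\infty\le\delta$ (and $+\infty$ if no such $n$ exists), where $\|f\|_\infty=\sup_{s\in S}|f(s)|$. *)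

(* Defs.v *)
From HB Require Import structures.
From mathcomp Require Import all_boot all_order all_algebra.
From mathcomp Require Import all_classical all_reals all_analysis.
From mathcomp Require Import measurable_realfun.
Set Implicit Arguments. Unset Strict Implicit. Unset Printing Implicit Defensive.
Import Order.TTheory GRing.Theory Num.Theory.
Local Open Scope classical_set_scope.
Local Open Scope ring_scope.

(* Polish space: a complete metric space (Hausdorff, so the pseudometric is a
   metric) that is separable (has a countable dense subset). *)
Definition polish_space (R : realType) (T : completePseudoMetricType R) : Prop :=
  hausdorff_space T /\ exists D : set T, countable D /\ dense D.

Definition borelType (R : realType) (T : completePseudoMetricType R) :=
  g_sigma_algebraType (@open T).

Local Open Scope ereal_scope.

(* exp_eps(t) = exp(t / eps), on extended reals (exp(-oo) = 0). *)
Definition exp_eps (R : realType) (eps : R) (t : \bar R) : \bar R :=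
  expeR (t * (eps^-1)%:E).

Definition Lexp (R : realType) (d : measure_display) (X : measurableType d)
  (mu : set X -> \bar R) (eps : R) (phi : X -> \bar R) : Prop :=
  [/\ measurable_fun setT phi, (forall x, phi x != +oo),
      0 < \int[mu]_x exp_eps eps (phi x)
    & \int[mu]_x exp_eps eps (phi x) < +oo].

Definition ce_transform (R : realType) (d : measure_display) (X : measurableType d)
  (Y : Type) (mu : set X -> \bar R) (c : X * Y -> R) (eps : R)
  (phi : X -> \bar R) (y : Y) : R :=
  (- eps * ln (fine (\int[mu]_x exp_eps eps (phi x - (c (x, y))%:E))))%R.

Definition supdist (R : realType) (S : Type) (f : S -> \bar R) (g : S -> R) : \bar R :=
  ereal_sup [set `|f s - (g s)%:E| | s in [set: S]].

Definition is_cover (R : realType) (S : Type) (G : set (S -> \bar R)) (delta : R)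
  (n : nat) : Prop :=
  exists fs : nat -> S -> R,
    forall f, G f -> exists i, (i < n)%N /\ supdist f (fs i) <= delta%:E.

(* uniform covering number N(delta, G, ||.||_oo); +oo if no finite cover *)
Definition covering_number (R : realType) (S : Type) (G : set (S -> \bar R))
  (delta : R) : \bar R :=
  ereal_inf [set (n%:R)%:E | n in is_cover G delta].

(* Main.v *)
Require Import Defs.
From HB Require Import structures.
From mathcomp Require Import all_boot all_order all_algebra.
From mathcomp Require Import all_classical all_reals all_analysis.
From mathcomp Require Import measurable_realfun.
From mathcomp Require Import lra.
Import Order.TTheory GRing.Theory Num.Theory.
Local Open Scope classical_set_scope.
Local Open Scope ring_scope.
Local Open Scope ereal_scope.
Lemma lnfine (R : realType) (a b : \bar R) (K : R) : 0 <= a -> 0 <= b -> (1 <= K)%R ->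
  a <= K%:E * b -> b <= K%:E * a -> (`|ln (fine a) - ln (fine b)| <= ln K)%R.
Proof.
move=> a0 b0 K1 ab ba.
have K0 : (0 < K)%R by apply: lt_le_trans K1.
have lnK0 : (0 <= ln K)%R by apply: ln_ge0.
case: a a0 ab ba => [r| |] //= a0 ab ba; case: b b0 ab ba => [s| |] //= b0 ab ba.
- rewrite lee_fin in a0; rewrite lee_fin in b0.
  rewrite -EFinM lee_fin in ab; rewrite -EFinM lee_fin in ba.
  have [r0|rp] := eqVneq r 0%R.
    subst r; have s0 : s = 0%R by apply/eqP; rewrite eq_le b0 andbT; move: ba; rewrite mulr0.
    by subst s; rewrite subrr normr0.
  have rpos : (0 < r)%R by rewrite lt_def rp a0.
  have spos : (0 < s)%R.
    rewrite lt_def b0 andbT; apply/eqP => s0; subst s.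
    by move: ab; rewrite mulr0 => ab; move: rp; rewrite eq_le ab a0.
  rewrite ler_norml; apply/andP; split.
  + have h : (ln s <= ln (K * r))%R by rewrite ler_ln ?posrE ?mulr_gt0.
    rewrite lnM ?posrE // in h; lra.
  + have h : (ln r <= ln (K * s))%R by rewrite ler_ln ?posrE ?mulr_gt0.
    rewrite lnM ?posrE // in h; lra.
- by rewrite subrr normr0.
Qed.
Lemma int_cmp d (T : measurableType d) (R : realType) (mu : {measure set T -> \bar R})
  (eps : R) (heps : (0 < eps)%R) (P Q C : T -> R)
  (mP : measurable_fun setT P) (mQ : measurable_fun setT Q) (mC : measurable_fun setT C)
  (dd : R) (h : forall x, (P x <= Q x + dd)%R) :
  \int[mu]_x (expR ((P x - C x) / eps))%:E <=
  (expR (dd / eps))%:E * \int[mu]_x (expR ((Q x - C x) / eps))%:E.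
Proof.
have mf : forall F : T -> R, measurable_fun setT F ->
    measurable_fun setT (fun x => (expR ((F x - C x) / eps))%:E).
  move=> F mF; apply/measurable_EFinP.
  exact: (measurableT_comp (@measurable_expR R) (measurable_funM (measurable_funB mF mC) (measurable_cst _))).
rewrite -(ge0_integralZl mu measurableT (mf Q mQ)); last 2 first.
- by move=> x _; rewrite lee_fin expR_ge0.
- by rewrite lee_fin expR_ge0.
apply: ge0_le_integral => //.
- exact (mf P mP).
- exact (emeasurable_funM (measurable_cst _) (mf Q mQ)).
move=> x _; rewrite -EFinM lee_fin -expRD ler_expR -mulrDl.
apply: ler_wpM2r; first by rewrite invr_ge0 ltW.
have := h x; lra.
Qed.
Lemma fin_of (R : realType) (e : \bar R) (r k : R) : `|e - r%:E| <= k%:E -> e = (fine e)%:E.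
Proof. by case: e. Qed.

Lemma ce_close d (T : measurableType d) (R : realType) (Y : Type)
  (mu : {measure set T -> \bar R}) (c : T * Y -> R) (eps : R) (heps : (0 < eps)%R)
  (hcy : forall y, measurable_fun setT (fun x => c (x, y)))
  (phi psi : T -> \bar R) (mphi : measurable_fun setT phi) (mpsi : measurable_fun setT psi)
  (dd : R) (hd : (0 <= dd)%R) (hP : forall x, phi x = (fine (phi x))%:E) (hQ : forall x, psi x = (fine (psi x))%:E)
  (hPQ : forall x, (`|fine (phi x) - fine (psi x)| <= dd)%R) (y : Y) :
  (`|ce_transform mu c eps phi y - ce_transform mu c eps psi y| <= dd)%R.
Proof.
have mP : measurable_fun setT (fine \o phi) := measurableT_comp (fine_measurable measurableT) mphi.
have mQ : measurable_fun setT (fine \o psi) := measurableT_comp (fine_measurable measurableT) mpsi.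
have eI : forall f : T -> \bar R, (forall x, f x = (fine (f x))%:E) ->
  \int[mu]_x exp_eps eps (f x - (c (x, y))%:E) =
  \int[mu]_x (expR (((fine \o f) x - c (x, y)) / eps))%:E.
  move=> f hf; apply: eq_integral => x _; rewrite /exp_eps hf /=.
  by [].
rewrite /ce_transform (eI _ hP) (eI _ hQ).
have h1 := @int_cmp _ _ _ mu eps heps _ _ _ mP mQ (hcy y) dd
  (fun x => ltac:(have := hPQ x; rewrite /= ler_norml => /andP[_ ?]; lra)).
have h2 := @int_cmp _ _ _ mu eps heps _ _ _ mQ mP (hcy y) dd
  (fun x => ltac:(have := hPQ x; rewrite /= ler_norml => /andP[? _]; lra)).
have i0 : forall f : T -> R, 0 <= \int[mu]_x (expR ((f x - c (x, y)) / eps))%:E.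
  by move=> f; apply: integral_ge0 => x _; rewrite lee_fin expR_ge0.
have K1 : (1 <= expR (dd / eps))%R by rewrite -expR0 ler_expR divr_ge0 // ltW.
have hn := @lnfine _ _ _ _ (i0 (fine \o phi)) (i0 (fine \o psi)) K1 h1 h2.
rewrite expRK in hn.
rewrite !mulNr opprK addrC -mulrBr normrM gtr0_norm //.
rewrite -ler_pdivlMl // mulrC.
by rewrite distrC.
Qed.

Theorem mainTheorem3 (R : realType)
  (X Y : completePseudoMetricType R)
  (hX : polish_space X) (hY : polish_space Y)
  (c : (borelType X * borelType Y)%type -> R)
  (hc_meas : measurable_fun setT c)
  (hc_low : exists b : R, forall p, (b <= c p)%R)
  (eps : R) (heps : (0 < eps)%R)
  (mu : probability (borelType X) R)
  (F : set (borelType X -> \bar R))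
  (hF : forall phi, F phi -> Lexp mu eps phi)
  (delta : R) (hdelta : (0 < delta)%R) :
  covering_number
    [set (fun y : borelType Y => (ce_transform mu c eps phi y)%:E) | phi in F]
    delta
  <= covering_number F (delta / 2).
Proof.
have hcy : forall y : borelType Y, measurable_fun setT (fun x : borelType X => c (x, y)).
  by move=> y; exact: (measurableT_comp hc_meas (pair2_measurable y)).
have pw : forall (phi : borelType X -> \bar R) (g : borelType X -> R) x,
    supdist phi g <= (delta / 2)%:E -> `|phi x - (g x)%:E| <= (delta / 2)%:E.
  move=> phi g x H; apply: le_trans H; apply: ereal_sup_ubound; by exists x.
have close : forall phi psi g, F phi -> F psi ->
    supdist phi g <= (delta / 2)%:E -> supdist psi g <= (delta / 2)%:E ->
    supdist (fun y : borelType Y => (ce_transform mu c eps phi y)%:E)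
            (ce_transform mu c eps psi) <= delta%:E.
  move=> phi psi g Fphi Fpsi Hp Hq.
  case: (hF _ Fphi) => mphi _ _ _; case: (hF _ Fpsi) => mpsi _ _ _.
  apply: ge_ereal_sup => _ [y _ <-].
  rewrite -EFinB abse_EFin lee_fin.
  have hP : forall x, phi x = (fine (phi x))%:E by move=> x; exact: fin_of (pw _ _ x Hp).
  have hQ : forall x, psi x = (fine (psi x))%:E by move=> x; exact: fin_of (pw _ _ x Hq).
  apply: (@ce_close _ _ _ _ mu c eps heps hcy phi psi mphi mpsi delta (ltW hdelta) hP hQ) => x.
  have := pw _ _ x Hp; have := pw _ _ x Hq.
  rewrite {1}hQ {1}hP -!EFinB !abse_EFin !lee_fin.
  rewrite !ler_norml => /andP[a1 a2] /andP[b1 b2]; apply/andP; split; lra.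
apply: ereal_inf_le_tmp => _ [n [fs hfs] <-]; exists n => //.
have : forall i, exists h : borelType Y -> R, forall phi, F phi ->
    supdist phi (fs i) <= (delta / 2)%:E ->
    supdist (fun y : borelType Y => (ce_transform mu c eps phi y)%:E) h <= delta%:E.
  move=> i; case: (pselect (exists phi0, F phi0 /\ supdist phi0 (fs i) <= (delta / 2)%:E)).
    move=> [phi0 [F0 H0]]; exists (ce_transform mu c eps phi0) => phi Fphi H.
    exact: (close _ _ _ Fphi F0 H H0).
  move=> N; exists (fun _ => 0%R) => phi Fphi H; exfalso; apply: N; by exists phi.
move=> /choice [hs Hhs]; exists hs => _ [phi Fphi <-].
have [i [ltin Hi]] := hfs phi Fphi.
by exists i; split => //; apply: Hhs.
Qed.
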